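(* Let $n>3$ be a real number. The fourth-order algebraic differential equation $$y''''\,(y')^2-3\,y'''\,y''\,y'+2\left(1-n^{-2}\right)(y'')^3=0 \qquad \text{(B)}$$ is universal: for every continuous function $\phi:\mathbb R\to\mathbb R$ and every positive continuous function $\epsilon:\mathbb R\to(0,\infty)$ there exists a function $y:\mathbb R\to\mathbb R$ of class $C^4$ which satisfies (B) at every point of $\mathbb R$ and such that $$|y(t)-\phi(t)|<\epsilon(t)\qquad\text{for all } t\in\mathbb R.$$
   Context: A polynomial ordinary differential equation $P(y,y',\dots,y^{(k)})=0$ is called universal if for every continuous $\phi:\mathbb R\to\mathbb R$ and every positive continuous $\epsilon:\mathbb R\to(0,\infty)$ it has a solution $y$, defined and sufficiently differentiable on all of $\mathbb R$ (here: $C^4$, so that the equation holds pointwise), with $|y(t)-\phi(t)|<\epsilon(t)$ for all real $t$. *)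

(* Defs.v *)
From Stdlib Require Import Reals.
From Coquelicot Require Import Coquelicot.
Open Scope R_scope.

Definition C4 (y : R -> R) : Prop :=
  (forall k : nat, (k <= 4)%nat -> forall t : R, ex_derive_n y k t) /\
  (forall t : R, continuous (Derive_n y 4) t).

Definition eqB (n : R) (y : R -> R) (t : R) : Prop :=
  Derive_n y 4 t * (Derive_n y 1 t) ^ 2
  - 3 * Derive_n y 3 t * Derive_n y 2 t * Derive_n y 1 t
  + 2 * (1 - / (n ^ 2)) * (Derive_n y 2 t) ^ 3 = 0.

(* Main.v *)
Require Import Defs.
From Stdlib Require Import Reals.
From Coquelicot Require Import Coquelicot.
From Stdlib Require Import Lra Psatz ZArith ClassicalEpsilon Classical.
Open Scope R_scope.

Definition Fn (n r : R) : R := sqrt (1 + r^4 / n^2).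

Lemma r4n_ge0 n r : 0 < n -> 0 <= r^4/n^2.
Proof.
  intros Hn. apply Rdiv_le_0_compat.
  replace (r^4) with ((r*r)*(r*r)) by ring. nra. nra.
Qed.

Lemma Fn_ge1 n r : 0 < n -> 1 <= Fn n r.
Proof.
  intros Hn. unfold Fn. rewrite <- sqrt_1 at 1. apply sqrt_le_1_alt.
  pose proof (r4n_ge0 n r Hn). lra.
Qed.

Lemma Fn_pos n r : 0 < n -> 0 < Fn n r.
Proof. intros; pose proof (Fn_ge1 n r H); lra. Qed.

Lemma Fn_sq n r : 0 < n -> Fn n r * Fn n r = 1 + r^4/n^2.
Proof.
  intros Hn. unfold Fn. apply sqrt_sqrt.
  pose proof (r4n_ge0 n r Hn). lra.
Qed.

Lemma Fn_deriv n r : 0 < n -> is_derive (Fn n) r (2 * r^3 / n^2 / Fn n r).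
Proof.
  intros Hn. unfold Fn.
  pose proof (r4n_ge0 n r Hn).
  auto_derive. simpl in H |- *. unfold Rdiv in H. lra.
  replace (sqrt (1 + r*(r*(r*(r*1)))*/(n*(n*1)))) with (sqrt (1 + r^4/n^2)) by (f_equal; simpl; field; lra).
  assert (0 < sqrt (1 + r^4/n^2)) by (apply sqrt_lt_R0; lra).
  field. lra.
Qed.

Lemma Fn_cont n r : 0 < n -> continuous (Fn n) r.
Proof. intros Hn. apply (@ex_derive_continuous R_AbsRing R_NormedModule). eexists. apply Fn_deriv; auto. Qed.

Lemma invFn_cont n r : 0 < n -> continuous (fun r => / Fn n r) r.
Proof.
  intros Hn. apply (continuous_Rinv_comp (Fn n) r). apply Fn_cont; auto.
  apply Rgt_not_eq. apply Fn_pos; auto.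
Qed.

Definition G (n s : R) : R := RInt (fun r => / Fn n r) 0 s.

Lemma G_deriv n s : 0 < n -> is_derive (G n) s (/ Fn n s).
Proof.
  intros Hn. unfold G. apply (is_derive_RInt (fun r => / Fn n r) (RInt (fun r => / Fn n r) 0) 0 s).
  - apply filter_forall. intros b. apply (@RInt_correct R_CompleteNormedModule). apply (@ex_RInt_continuous R_CompleteNormedModule).
    intros z _. apply invFn_cont; auto.
  - apply invFn_cont; auto.
Qed.

Lemma G_cont n s : 0 < n -> continuity_pt (G n) s.
Proof.
  intros Hn. apply continuity_pt_filterlim.
  apply (@ex_derive_continuous R_AbsRing R_NormedModule). eexists. apply G_deriv; auto.
Qed.

Lemma G_incr n s1 s2 : 0 < n -> s1 < s2 -> G n s1 < G n s2.
Proof.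
  intros Hn H12.
  destruct (MVT_gen (G n) s1 s2 (fun s => / Fn n s)) as [c [_ Hc]].
  - intros x _. apply G_deriv; auto.
  - intros x _. apply G_cont; auto.
  - assert (0 < / Fn n c) by (apply Rinv_0_lt_compat, Fn_pos; auto).
    assert (0 < / Fn n c * (s2 - s1)) by (apply Rmult_lt_0_compat; lra). lra.
Qed.

Lemma G_le n s1 s2 : 0 < n -> s1 <= s2 -> G n s1 <= G n s2.
Proof. intros Hn [H|H]. left; apply G_incr; auto. subst; lra. Qed.

Lemma G_0 n : G n 0 = 0.
Proof. unfold G. apply (@RInt_point R_CompleteNormedModule). Qed.

Definition Aat (n r : R) : R := 2 * sqrt n * atan (r / sqrt n).

Lemma Aat_deriv n r : 0 < n -> is_derive (Aat n) r (2 / (1 + r^2 / n)).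
Proof.
  intros Hn. unfold Aat. assert (Hs: 0 < sqrt n) by (apply sqrt_lt_R0; auto).
  assert (Hss : sqrt n * sqrt n = n) by (apply sqrt_sqrt; lra).
  auto_derive. auto. unfold Rsqr.
  assert (0 <= r^2/n) by (apply Rdiv_le_0_compat; nra).
  replace (r * / sqrt n * (r * / sqrt n * 1)) with (r^2/n).
  field. split; [lra | split; [nra|lra]].
  replace (r^2) with (r*r) by ring. rewrite <- Hss at 1. field. lra.
Qed.

Lemma invF_le n r : 0 < n -> / Fn n r <= 2 / (1 + r^2/n).
Proof.
  intros Hn. pose proof (Fn_pos n r Hn). pose proof (Fn_sq n r Hn).
  assert (Ha : 0 <= r^2/n) by (apply Rdiv_le_0_compat; nra).
  assert (r^4/n^2 = (r^2/n)*(r^2/n)) by (field; lra).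
  set (a := r^2/n) in *. set (f := Fn n r) in *.
  assert (((1+a)/2)*((1+a)/2) <= f*f) by nra.
  assert ((1+a)/2 <= f). { destruct (Rle_or_lt ((1+a)/2) f); auto. nra. }
  apply Rmult_le_reg_l with (f * (1+a)). nra.
  field_simplify; try lra.
Qed.

Lemma cmp_cont n x : 0 < n -> continuous (fun r => 2 / (1 + r^2/n)) x.
Proof.
  intros Hn. apply (@ex_derive_continuous R_AbsRing R_NormedModule).
  assert (0 <= x^2/n) by (apply Rdiv_le_0_compat; nra).
  auto_derive. simpl in H. unfold Rdiv in H. lra.
Qed.

Lemma RInt_Aat n a b : 0 < n -> RInt (fun r => 2 / (1 + r^2/n)) a b = Aat n b - Aat n a.
Proof.
  intros Hn. apply is_RInt_unique.
  apply (@is_RInt_derive R_CompleteNormedModule (Aat n)).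
  - intros x _. apply Aat_deriv; auto.
  - intros x _. apply cmp_cont; auto.
Qed.

Lemma ex_RInt_invF n a b : 0 < n -> ex_RInt (fun r => / Fn n r) a b.
Proof. intros Hn. apply (@ex_RInt_continuous R_CompleteNormedModule). intros; apply invFn_cont; auto. Qed.

Lemma ex_RInt_cmp n a b : 0 < n -> ex_RInt (fun r => 2 / (1 + r^2/n)) a b.
Proof. intros Hn. apply (@ex_RInt_continuous R_CompleteNormedModule). intros; apply cmp_cont; auto. Qed.

Lemma Aat_bound n r : 0 < n -> Rabs (Aat n r) <= PI * sqrt n.
Proof.
  intros Hn. unfold Aat. assert (Hs: 0 < sqrt n) by (apply sqrt_lt_R0; auto).
  destruct (atan_bound (r / sqrt n)).
  apply Rabs_le. split; nra.
Qed.

Lemma G_upper n s : 0 < n -> G n s <= PI * sqrt n.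
Proof.
  intros Hn. destruct (Rle_or_lt 0 s).
  - unfold G. apply Rle_trans with (RInt (fun r => 2 / (1 + r^2/n)) 0 s).
    apply RInt_le; auto. apply ex_RInt_invF; auto. apply ex_RInt_cmp; auto.
    intros; apply invF_le; auto.
    rewrite RInt_Aat; auto. pose proof (Aat_bound n s Hn). pose proof (Aat_bound n 0 Hn).
    apply Rabs_le_between in H0. unfold Aat at 2. rewrite Rdiv_0_l, atan_0. lra.
  - pose proof (G_le n s 0 Hn (Rlt_le _ _ H)). rewrite G_0 in H0.
    assert (0 < PI * sqrt n). apply Rmult_lt_0_compat. apply PI_RGT_0. apply sqrt_lt_R0; auto. lra.
Qed.

Lemma G_lower n s : 0 < n -> - (PI * sqrt n) <= G n s.
Proof.
  intros Hn. destruct (Rle_or_lt 0 s).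
  - pose proof (G_le n 0 s Hn H). rewrite G_0 in H0.
    assert (0 < PI * sqrt n). apply Rmult_lt_0_compat. apply PI_RGT_0. apply sqrt_lt_R0; auto. lra.
  - unfold G. rewrite <- (opp_RInt_swap (V:=R_CompleteNormedModule)).
    2: apply ex_RInt_invF; auto.
    assert (RInt (fun r => / Fn n r) s 0 <= RInt (fun r => 2 / (1 + r^2/n)) s 0).
    apply RInt_le; auto. lra. apply ex_RInt_invF; auto. apply ex_RInt_cmp; auto.
    intros; apply invF_le; auto.
    rewrite RInt_Aat in H0; auto. pose proof (Aat_bound n s Hn).
    apply Rabs_le_between in H1. unfold Aat at 1 in H0. rewrite Rdiv_0_l, atan_0 in H0.
    simpl. unfold opp; simpl. lra.
Qed.


Lemma lub_ex (E : R -> Prop) : exists L, (bound E /\ (exists x, E x)) -> is_lub E L.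
Proof.
  destruct (classic (bound E /\ (exists x, E x))) as [[Hb He]|Hn].
  - destruct (completeness E Hb He) as [L HL]. exists L; auto.
  - exists 0. intros H; contradiction.
Qed.

Definition lubE (E : R -> Prop) : R := proj1_sig (constructive_indefinite_description _ (lub_ex E)).

Lemma lubE_spec E : bound E -> (exists x, E x) -> is_lub E (lubE E).
Proof. intros. unfold lubE. destruct constructive_indefinite_description as [L HL]. simpl. auto. Qed.

Definition Lp (n : R) : R := lubE (fun x => exists s, x = G n s).
Definition Lm (n : R) : R := - lubE (fun x => exists s, x = - G n s).

Lemma Lp_spec n : 0 < n -> is_lub (fun x => exists s, x = G n s) (Lp n).
Proof.
  intros Hn. apply lubE_spec. exists (PI * sqrt n). intros x [s ->]. apply G_upper; auto.
  exists (G n 0). exists 0; auto.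
Qed.

Lemma Lm_spec n : 0 < n -> is_lub (fun x => exists s, x = - G n s) (- Lm n).
Proof.
  intros Hn. unfold Lm. rewrite Ropp_involutive. apply lubE_spec. exists (PI * sqrt n). intros x [s ->].
  pose proof (G_lower n s Hn). lra.
  exists (- G n 0). exists 0; auto.
Qed.

Lemma Lp_gt n s : 0 < n -> G n s < Lp n.
Proof.
  intros Hn. destruct (Lp_spec n Hn) as [H1 _]. pose proof (H1 (G n (s+1)) (ex_intro _ (s+1) eq_refl)).
  pose proof (G_incr n s (s+1) Hn ltac:(lra)). lra.
Qed.

Lemma Lm_lt n s : 0 < n -> Lm n < G n s.
Proof.
  intros Hn. destruct (Lm_spec n Hn) as [H1 _]. pose proof (H1 (- G n (s-1)) (ex_intro _ (s-1) eq_refl)).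
  pose proof (G_incr n (s-1) s Hn ltac:(lra)). lra.
Qed.

Lemma Lp_approx n t : 0 < n -> t < Lp n -> exists s, t < G n s.
Proof.
  intros Hn Ht. destruct (Lp_spec n Hn) as [_ H2].
  apply NNPP. intros Hc. assert (Lp n <= t). apply H2. intros x [s ->].
  destruct (Rle_or_lt (G n s) t); auto. exfalso; apply Hc; exists s; auto. lra.
Qed.

Lemma Lm_approx n t : 0 < n -> Lm n < t -> exists s, G n s < t.
Proof.
  intros Hn Ht. destruct (Lm_spec n Hn) as [_ H2].
  apply NNPP. intros Hc. assert (- Lm n <= - t). apply H2. intros x [s ->].
  destruct (Rle_or_lt t (G n s)); try lra. exfalso; apply Hc; exists s; auto. lra.
Qed.

Lemma Lm_Lp n : 0 < n -> Lm n < 0 < Lp n.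
Proof. intros Hn. pose proof (Lm_lt n 0 Hn). pose proof (Lp_gt n 0 Hn). rewrite G_0 in *. lra. Qed.

Lemma ginv_ex n t : exists s, (0 < n /\ Lm n < t < Lp n) -> G n s = t.
Proof.
  destruct (classic (0 < n /\ Lm n < t < Lp n)) as [[Hn Ht]|Hc].
  - destruct (Lp_approx n t Hn (proj2 Ht)) as [s2 Hs2].
    destruct (Lm_approx n t Hn (proj1 Ht)) as [s1 Hs1].
    assert (s1 < s2). { destruct (Rle_or_lt s2 s1); auto. pose proof (G_le n s2 s1 Hn H). lra. }
    destruct (IVT (fun s => G n s - t) s1 s2) as [z [_ Hz]]; auto.
    + apply continuity_minus. intros x; apply G_cont; auto. apply continuity_const. intros a b; auto.
    + lra.
    + lra.
    + exists z. intros _. lra.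
  - exists 0. intros H; contradiction.
Qed.

Definition ginv (n t : R) : R := proj1_sig (constructive_indefinite_description _ (ginv_ex n t)).

Lemma ginv_spec n t : 0 < n -> Lm n < t < Lp n -> G n (ginv n t) = t.
Proof. intros. unfold ginv. destruct constructive_indefinite_description as [s Hs]. simpl. auto. Qed.

Lemma G_ginv_mono n t1 t2 : 0 < n -> Lm n < t1 < Lp n -> Lm n < t2 < Lp n -> t1 < t2 -> ginv n t1 < ginv n t2.
Proof.
  intros Hn H1 H2 H12. destruct (Rle_or_lt (ginv n t2) (ginv n t1)); auto.
  pose proof (G_le n _ _ Hn H). rewrite !ginv_spec in H0; auto. lra.
Qed.

Lemma ginv_G n s : 0 < n -> ginv n (G n s) = s.
Proof.
  intros Hn. assert (Hd : Lm n < G n s < Lp n) by (split; [apply Lm_lt | apply Lp_gt]; auto).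
  pose proof (ginv_spec n _ Hn Hd). set (s' := ginv n (G n s)) in *.
  destruct (Rtotal_order s s') as [h|[h|h]]; auto.
  apply (G_incr n) in h; auto; lra. apply (G_incr n) in h; auto; lra.
Qed.

Lemma ginv_cont n t : 0 < n -> Lm n < t < Lp n -> continuity_pt (ginv n) t.
Proof.
  intros Hn Ht. set (s0 := ginv n t).
  assert (Hin : forall s, Lm n < G n s < Lp n) by (split; [apply Lm_lt | apply Lp_gt]; auto).
  apply (Ranalysis5.continuity_pt_recip_interv (G n) (ginv n) (s0 - 1) (s0 + 1)).
  - lra.
  - intros; apply G_incr; auto.
  - intros x H1 H2. unfold comp. apply ginv_spec; auto. pose proof (Hin (s0-1)); pose proof (Hin (s0+1)). unfold id; split; lra.
  - intros x H1 H2. pose proof (Hin (s0-1)); pose proof (Hin (s0+1)).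
    split.
    + destruct (Rle_or_lt (s0 - 1) (ginv n x)); auto.
      pose proof (G_incr n _ _ Hn H3). rewrite ginv_spec in H4; auto; lra.
    + destruct (Rle_or_lt (ginv n x) (s0 + 1)); auto.
      pose proof (G_incr n _ _ Hn H3). rewrite ginv_spec in H4; auto; lra.
  - intros; apply G_cont; auto.
  - pose proof (ginv_spec n t Hn Ht). fold s0 in H. assert (G n (s0-1) < G n s0) by (apply G_incr; auto; lra). assert (G n s0 < G n (s0+1)) by (apply G_incr; auto; lra). split; lra.
Qed.

Lemma ginv_deriv n t : 0 < n -> Lm n < t < Lp n -> is_derive (ginv n) t (Fn n (ginv n t)).
Proof.
  intros Hn Ht. apply is_derive_Reals.
  assert (dG : forall a, derivable_pt (G n) a).
  { intros a. exists (/ Fn n a). apply is_derive_Reals. apply G_deriv; auto. }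
  set (lb := (Lm n + t)/2). set (ub := (t + Lp n)/2).
  assert (Hlu : Lm n < lb < t /\ t < ub < Lp n) by (unfold lb, ub; lra).
  assert (Hinc : ginv n lb <= ginv n t <= ginv n ub).
  { split; left; apply G_ginv_mono; try lra; auto. }
  pose proof (Ranalysis5.derivable_pt_lim_recip_interv (G n) (ginv n) lb ub t
    (fun a _ => dG a) (ginv_cont n t Hn Ht) ltac:(lra) ltac:(lra) Hinc) as H.
  assert (Hd : derive_pt (G n) (ginv n t) (dG (ginv n t)) = / Fn n (ginv n t)).
    { apply derive_pt_eq_0. apply is_derive_Reals. apply G_deriv; auto. }
  cbv beta in H. rewrite Hd in H. pose proof (Fn_pos n (ginv n t) Hn).
  replace (Fn n (ginv n t)) with (1 / / Fn n (ginv n t)) by (field; lra).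
  apply H.
  - intros x Hx. unfold comp, id. apply ginv_spec; auto. lra.
  - apply Rgt_not_eq. apply Rinv_0_lt_compat; auto.
Qed.

Lemma is_derive_eq (f : R -> R) x l l' : is_derive f x l -> l = l' -> is_derive f x l'.
Proof. intros H ->; auto. Qed.

Ltac req := match goal with |- ?a = ?b => change (@eq R a b) end.

Definition Hh (n v : R) : R := v^2/n + Fn n v.
Definition P (n v : R) : R := exp (-(n/2) * ln (Hh n v)).

Lemma Hh_ge1 n v : 0 < n -> 1 <= Hh n v.
Proof. intros Hn. unfold Hh. pose proof (Fn_ge1 n v Hn). assert (0 <= v^2/n) by (apply Rdiv_le_0_compat; nra). lra. Qed.

Lemma Hh_deriv n v : 0 < n -> is_derive (Hh n) v (2*v/n * Hh n v / Fn n v).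
Proof.
  intros Hn. unfold Hh. pose proof (Fn_deriv n v Hn). pose proof (Fn_pos n v Hn).
  replace (2*v/n * (v^2/n + Fn n v) / Fn n v) with (2*v/n + 2*v^3/n^2/Fn n v)
    by (field; lra).
  apply (is_derive_plus (fun v => v^2/n) (Fn n)); auto.
  auto_derive; auto. field. lra.
Qed.

Lemma P_pos n v : 0 < P n v.
Proof. unfold P. apply exp_pos. Qed.

Lemma P_deriv n v : 0 < n -> is_derive (P n) v (- v * P n v / Fn n v).
Proof.
  intros Hn. unfold P. pose proof (Hh_deriv n v Hn). pose proof (Hh_ge1 n v Hn).
  pose proof (Fn_pos n v Hn).
  eapply is_derive_ext. intros; reflexivity.
  pose proof (is_derive_comp ln (Hh n) v (/ Hh n v) _ (proj2 (is_derive_Reals _ _ _) (derivable_pt_lim_ln (Hh n v) ltac:(lra))) H) as H2.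
  pose proof (is_derive_scal _ v (-(n/2)) _ H2) as H3.
  pose proof (is_derive_comp exp _ v _ _ (proj2 (is_derive_Reals _ _ _) (derivable_pt_lim_exp (-(n/2) * ln (Hh n v)))) H3) as H4.
  simpl in H4. unfold scal, mult in H4; simpl in H4. unfold mult in H4; simpl in H4.
  apply (is_derive_eq _ _ _ _ H4). req. field. lra.
Qed.

Lemma D_mult (f g : R -> R) x df dg : is_derive f x df -> is_derive g x dg ->
  is_derive (fun t => f t * g t) x (df * g x + f x * dg).
Proof.
  intros H1 H2. pose proof (is_derive_mult f g x df dg H1 H2) as H. simpl in H.
  apply (is_derive_eq _ _ _ _ (H (fun a b => Rmult_comm a b))). req. unfold plus, mult; simpl. ring.
Qed.

Lemma D_plus (f g : R -> R) x df dg : is_derive f x df -> is_derive g x dg ->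
  is_derive (fun t => f t + g t) x (df + dg).
Proof. intros H1 H2. apply (is_derive_plus f g x df dg H1 H2). Qed.

Lemma D_minus (f g : R -> R) x df dg : is_derive f x df -> is_derive g x dg ->
  is_derive (fun t => f t - g t) x (df - dg).
Proof. intros H1 H2. apply (is_derive_minus f g x df dg H1 H2). Qed.

Lemma D_scal (f : R -> R) c x df : is_derive f x df -> is_derive (fun t => c * f t) x (c * df).
Proof. intros H1. apply (is_derive_scal f x c df H1). Qed.

Lemma D_const c x : is_derive (fun _ : R => c) x 0.
Proof. apply (is_derive_const c x). Qed.

Definition Dom (n t : R) : Prop := Lm n < t < Lp n.

Lemma dV n t : 0 < n -> Dom n t -> is_derive (ginv n) t (Fn n (ginv n t)).
Proof. intros; apply ginv_deriv; auto. Qed.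

Lemma dFV n t : 0 < n -> Dom n t -> is_derive (fun t => Fn n (ginv n t)) t (2 * ginv n t ^3 / n^2).
Proof.
  intros Hn Ht. pose proof (is_derive_comp (Fn n) (ginv n) t _ _ (Fn_deriv n (ginv n t) Hn) (dV n t Hn Ht)) as H.
  apply (is_derive_eq _ _ _ _ H). req. unfold scal; simpl; unfold mult; simpl.
  pose proof (Fn_pos n (ginv n t) Hn). field. lra.
Qed.

Lemma dPV n t : 0 < n -> Dom n t -> is_derive (fun t => P n (ginv n t)) t (- ginv n t * P n (ginv n t)).
Proof.
  intros Hn Ht. pose proof (is_derive_comp (P n) (ginv n) t _ _ (P_deriv n (ginv n t) Hn) (dV n t Hn Ht)) as H.
  apply (is_derive_eq _ _ _ _ H). req. unfold scal; simpl; unfold mult; simpl.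
  pose proof (Fn_pos n (ginv n t) Hn). field. lra.
Qed.

Definition Q0 (n v : R) : R := 1.
Definition Q1 (n v : R) : R := - v.
Definition Q2 (n v : R) : R := v^2 - Fn n v.
Definition Q3 (n v : R) : R := 3 * v * Fn n v - 2 * v^3 / n^2 - v^3.

Definition cc (Q : R -> R -> R) (n t : R) : R := Q n (ginv n t) * P n (ginv n t).

Lemma dc0 n t : 0 < n -> Dom n t -> is_derive (cc Q0 n) t (cc Q1 n t).
Proof.
  intros Hn Ht. unfold cc, Q0, Q1.
  pose proof (D_mult _ _ t _ _ (D_const 1 t) (dPV n t Hn Ht)) as H.
  apply (is_derive_eq _ _ _ _ H). req. ring.
Qed.

Lemma dc1 n t : 0 < n -> Dom n t -> is_derive (cc Q1 n) t (cc Q2 n t).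
Proof.
  intros Hn Ht. unfold cc, Q1, Q2.
  pose proof (D_mult _ _ t _ _ (D_scal _ (-1) t _ (dV n t Hn Ht)) (dPV n t Hn Ht)) as H.
  eapply is_derive_ext. 2: apply (is_derive_eq _ _ _ _ H). intros; simpl; ring. req. ring.
Qed.

Lemma dc2 n t : 0 < n -> Dom n t -> is_derive (cc Q2 n) t (cc Q3 n t).
Proof.
  intros Hn Ht. unfold cc, Q2, Q3.
  pose proof (D_mult _ _ t _ _ (dV n t Hn Ht) (dV n t Hn Ht)) as Hv2.
  pose proof (D_minus _ _ t _ _ Hv2 (dFV n t Hn Ht)) as H1.
  pose proof (D_mult _ _ t _ _ H1 (dPV n t Hn Ht)) as H.
  eapply is_derive_ext. 2: apply (is_derive_eq _ _ _ _ H). intros; simpl; ring. req. ring.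
Qed.

Lemma cc_cont Q n t : 0 < n -> Dom n t -> (forall t, Dom n t -> exists d, is_derive (cc Q n) t d) -> continuous (cc Q n) t.
Proof.
  intros Hn Ht H. destruct (H t Ht) as [d Hd].
  apply (@ex_derive_continuous R_AbsRing R_NormedModule). exists d; auto.
Qed.

Lemma dc3 n t : 0 < n -> Dom n t -> exists d, is_derive (cc Q3 n) t d.
Proof.
  intros Hn Ht. unfold cc, Q3.
  pose proof (dV n t Hn Ht) as hV. pose proof (dFV n t Hn Ht) as hF. pose proof (dPV n t Hn Ht) as hP.
  pose proof (D_mult _ _ t _ _ (D_scal _ 3 t _ hV) hF) as h1.
  pose proof (D_mult _ _ t _ _ hV (D_mult _ _ t _ _ hV hV)) as h3.
  pose proof (D_mult _ _ t _ _ (D_minus _ _ t _ _ (D_minus _ _ t _ _ h1 (D_scal _ (2/n^2) t _ h3)) h3) hP) as H.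
  eexists. eapply is_derive_ext. 2: apply H. intros; simpl. field. lra.
Qed.

Lemma sq_lt_abs x e : 0 < e -> x * x < e * e -> Rabs x < e.
Proof.
  intros He H. destruct (Rle_or_lt e (Rabs x)); auto.
  assert (e * e <= Rabs x * Rabs x) by nra. rewrite <- Rabs_mult in H1.
  rewrite Rabs_right in H1. lra. nra.
Qed.

Lemma Hh_facts n v : 0 < n -> 1 <= Hh n v /\ 1 <= Fn n v /\ Fn n v <= Hh n v /\ v^2 <= n * Hh n v.
Proof.
  intros Hn. pose proof (Fn_ge1 n v Hn). unfold Hh.
  assert (0 <= v^2/n) by (apply Rdiv_le_0_compat; nra).
  assert (v^2 = n * (v^2/n)) by (field; lra).
  repeat split; try lra. nra.
Qed.

Lemma Q_bound (Q : R -> R -> R) n : 3 < n ->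
  (Q = Q0 \/ Q = Q1 \/ Q = Q2 \/ Q = Q3) ->
  forall v, (Q n v)^2 <= (18*n^3 + 18*n + (n+1)^2 + n + 1) * (Hh n v)^3.
Proof.
  intros Hn HQ v. destruct (Hh_facts n v ltac:(lra)) as [h1 [h2 [h3 h4]]].
  set (H := Hh n v) in *. set (F := Fn n v) in *.
  assert (hH3 : 1 <= H^3) by (replace (H^3) with (H*(H*H)) by ring; nra).
  assert (hH2 : H^2 <= H^3) by (replace (H^3) with (H*(H*H)) by ring; nra).
  assert (hH1 : H <= H^3) by (replace (H^3) with (H*(H*H)) by ring; nra).
  assert (Kpos : 0 <= 18*n^3 + 18*n) by nra.
  assert (Hp : 0 <= 18*n^3 + 18*n + n + 1) by nra.
  destruct HQ as [ -> | [ -> | [ -> | -> ]]]; unfold Q0, Q1, Q2, Q3; fold F.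
  - assert (0 <= (18*n^3 + 18*n + n + 1) * H^3) by nra.
    assert (0 <= (n+1)^2 * H^3) by nra. nra.
  - assert (v^2 <= n * H^3) by nra.
    assert (0 <= (18*n^3 + 18*n + (n+1)^2 + 1) * H^3) by nra. nra.
  - assert (0 <= v^2) by nra.
    assert ((v^2 - F)^2 <= ((n+1)*H)^2) by nra.
    assert (((n+1)*H)^2 <= (n+1)^2 * H^3) by nra.
    assert (0 <= (18*n^3 + 18*n + n + 1) * H^3) by nra. nra.
  - assert (hv2 : 0 <= v^2) by nra.
    assert (hc : 0 <= 2/n^2 + 1 <= 3).
    { split. assert (0 <= 2/n^2) by (apply Rdiv_le_0_compat; nra). lra.
      assert (2/n^2 <= 2) by (apply Rmult_le_reg_l with (n^2); [nra|]; field_simplify; nra). lra. }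
    replace (3 * v * F - 2 * v^3/n^2 - v^3) with (3 * v * F - (2/n^2+1) * v^3) by (field; lra).
    set (c := 2/n^2 + 1) in *.
    assert (A0 : 0 <= (3*v*F + c*v^3)^2) by apply pow2_ge_0.
    assert (A1 : (3*v*F - c*v^3)^2 <= 2*(9*v^2*F^2) + 2*(c^2 * (v^2)^3)) by nra.
    assert (A2 : v^2 * F^2 <= n*H * H^2) by (apply Rmult_le_compat; nra).
    assert (A3 : (v^2)^3 <= (n*H)^3) by (apply pow_incr; nra).
    assert (A4 : c^2 <= 9) by nra.
    assert (A5 : c^2 * (v^2)^3 <= 9 * (n*H)^3) by (apply Rmult_le_compat; nra).
    assert (A6 : (n*H)^3 = n^3 * H^3) by ring.
    assert (A7 : n*H*H^2 = n * H^3) by ring.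
    assert (0 <= ((n+1)^2 + n + 1) * H^3) by nra. nra.
Qed.

Lemma QP_decay (Q : R -> R -> R) n : 3 < n ->
  (Q = Q0 \/ Q = Q1 \/ Q = Q2 \/ Q = Q3) ->
  forall e, 0 < e -> exists V0, forall v, V0 <= Rabs v -> Rabs (Q n v * P n v) < e.
Proof.
  intros Hn HQ e He.
  set (K := 18*n^3 + 18*n + (n+1)^2 + n + 1).
  assert (HK : 0 < K) by (unfold K; nra).
  set (lam := ln (e*e/K) / (3 - n)).
  exists (sqrt (n * (exp lam + 1))). intros v Hv.
  assert (Hs : 0 <= sqrt (n * (exp lam + 1))) by apply sqrt_pos.
  assert (Hv2 : n * (exp lam + 1) <= v^2).
  { rewrite <- (sqrt_sqrt (n * (exp lam + 1))). 2: { pose proof (exp_pos lam). nra. }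
    replace (v^2) with (Rabs v * Rabs v). apply Rmult_le_compat; auto.
    rewrite <- Rabs_mult. rewrite Rabs_right. ring. nra. }
  destruct (Hh_facts n v ltac:(lra)) as [h1 [h2 [h3 h4]]].
  assert (HH : exp lam < Hh n v).
  { unfold Hh. assert (v^2/n >= exp lam + 1). { apply Rle_ge. apply Rmult_le_reg_l with n. lra.
      field_simplify; lra. } lra. }
  assert (Hl : lam < ln (Hh n v)).
  { rewrite <- (ln_exp lam). apply ln_increasing. apply exp_pos. auto. }
  pose proof (Q_bound Q n Hn HQ v) as HB. fold K in HB.
  apply sq_lt_abs; auto.
  assert (HP2 : P n v * P n v = exp (- n * ln (Hh n v))).
  { unfold P. rewrite <- exp_plus. f_equal. field. }
  assert (HH3 : Hh n v ^3 = exp (3 * ln (Hh n v))).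
  { replace (3 * ln (Hh n v)) with (ln (Hh n v) + ln (Hh n v) + ln (Hh n v)) by ring.
    rewrite !exp_plus, exp_ln by lra. ring. }
  replace (Q n v * P n v * (Q n v * P n v)) with ((Q n v)^2 * (P n v * P n v)) by ring.
  apply Rle_lt_trans with (K * Hh n v ^3 * (P n v * P n v)).
  { apply Rmult_le_compat_r. pose proof (P_pos n v). nra. auto. }
  rewrite HP2, HH3, Rmult_assoc, <- exp_plus.
  assert (Hexp : exp (3 * ln (Hh n v) + - n * ln (Hh n v)) < exp (ln (e * e / K))).
  { apply exp_increasing.
    assert (ln (e*e/K) = lam * (3 - n)) by (unfold lam; field; lra).
    rewrite H. nra. }
  rewrite exp_ln in Hexp. 2: { apply Rdiv_lt_0_compat; nra. }
  apply Rmult_lt_compat_l with (r := K) in Hexp; auto.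
  replace (K * (e * e / K)) with (e*e) in Hexp by (field; lra). auto.
Qed.

Lemma loc_in a b x : a < x < b -> locally x (fun y => a < y < b).
Proof. intros H. apply (locally_interval _ x a b); simpl; try lra. intros y H1 H2; simpl in *; lra. Qed.

Lemma loc_gt a x : a < x -> locally x (fun y => a < y).
Proof. intros H. apply (locally_interval _ x a p_infty); simpl; auto. Qed.

Lemma loc_lt a x : x < a -> locally x (fun y => y < a).
Proof. intros H. apply (locally_interval _ x m_infty a); simpl; auto. Qed.

Lemma cont_eps (f : R -> R) x :
  (forall e, 0 < e -> exists d, 0 < d /\ forall y, Rabs (y - x) < d -> Rabs (f y - f x) < e) ->
  continuous f x.
Proof.
  intros H. apply continuity_pt_filterlim. intros e He. destruct (H e He) as [d [Hd H1]].
  exists d. split; auto. intros y [_ Hy]. apply H1. apply Hy.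
Qed.

Lemma cont_eps_inv (f : R -> R) x : continuous f x ->
  forall e, 0 < e -> exists d, 0 < d /\ forall y, Rabs (y - x) < d -> Rabs (f y - f x) < e.
Proof.
  intros H e He. apply continuity_pt_filterlim in H. destruct (H e He) as [d [Hd H1]].
  exists d. split; auto. intros y Hy. destruct (Req_dec y x) as [->|Hne].
  rewrite Rminus_diag, Rabs_R0; auto. apply H1. split. split; [exact I | auto]. apply Hy.
Qed.

Lemma deriv_from_lim (f g : R -> R) a d0 : 0 < d0 ->
  (forall x, continuous f x) ->
  (forall x, 0 < Rabs (x - a) < d0 -> is_derive f x (g x)) ->
  continuous g a -> is_derive f a (g a).
Proof.
  intros Hd0 Hf Hd Hg. apply is_derive_Reals. intros e He.
  destruct (cont_eps_inv g a Hg e He) as [d [Hdd Hgd]].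
  exists (mkposreal (Rmin d d0) (Rmin_pos _ _ Hdd Hd0)). intros h Hh0 Hh. simpl in Hh.
  destruct (MVT_gen f a (a + h) g) as [c [Hc Heq]].
  - intros x Hx. apply Hd. 
    destruct (Rle_or_lt 0 h).
    + rewrite Rmin_left in Hx by lra. rewrite Rmax_right in Hx by lra.
      rewrite Rabs_right by lra. split; try lra.
      apply Rlt_le_trans with (Rabs h). rewrite Rabs_right by lra; lra.
      apply Rlt_le, Rlt_le_trans with (1 := Hh), Rmin_r.
    + rewrite Rmin_right in Hx by lra. rewrite Rmax_left in Hx by lra.
      rewrite Rabs_left by lra. split; try lra.
      apply Rlt_le_trans with (Rabs h). rewrite Rabs_left by lra; lra.
      apply Rlt_le, Rlt_le_trans with (1 := Hh), Rmin_r.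
  - intros x _. apply continuity_pt_filterlim. apply Hf.
  - replace (a + h - a) with h in Heq by ring.
    replace ((f (a + h) - f a) / h - g a) with (g c - g a) by (rewrite Heq; field; auto).
    apply Hgd.
    assert (Rabs h < d) by (apply Rlt_le_trans with (1 := Hh), Rmin_l).
    destruct (Rle_or_lt 0 h).
    + rewrite Rmin_left in Hc by lra. rewrite Rmax_right in Hc by lra.
      rewrite Rabs_right in H |- * by lra; lra.
    + rewrite Rmin_right in Hc by lra. rewrite Rmax_left in Hc by lra.
      rewrite Rabs_left in H by lra. apply Rabs_lt_between'. lra.
Qed.

Definition cut (n : R) (f : R -> R) (t : R) : R :=
  if Rlt_dec (Lm n) t then if Rlt_dec t (Lp n) then f t else 0 else 0.

Definition bb (Q : R -> R -> R) (n : R) : R -> R := cut n (cc Q n).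

Lemma cut_in n f t : Dom n t -> cut n f t = f t.
Proof. intros [H1 H2]. unfold cut. destruct Rlt_dec; [|lra]. destruct Rlt_dec; [auto|lra]. Qed.

Lemma cut_out n f t : ~ Dom n t -> cut n f t = 0.
Proof. intros H. unfold cut. destruct Rlt_dec; auto. destruct Rlt_dec; auto. exfalso; apply H; split; auto. Qed.

Lemma cut_loc_in n f t : Dom n t -> locally t (fun y => cut n f y = f y).
Proof. intros H. apply filter_imp with (2 := loc_in _ _ _ H). intros y Hy. apply cut_in; auto. Qed.

Lemma cut_loc_out n f t : (t < Lm n \/ Lp n < t) -> locally t (fun y => cut n f y = 0).
Proof.
  intros [H|H].
  - apply filter_imp with (2 := loc_lt _ _ H). intros y Hy. apply cut_out. unfold Dom; lra.
  - apply filter_imp with (2 := loc_gt _ _ H). intros y Hy. apply cut_out. unfold Dom; lra.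
Qed.

Lemma loc_sym (f g : R -> R) t : locally t (fun y => f y = g y) -> locally t (fun y => g y = f y).
Proof. apply filter_imp. intros; auto. Qed.

Definition QS (Q : R -> R -> R) : Prop := Q = Q0 \/ Q = Q1 \/ Q = Q2 \/ Q = Q3.

Lemma cc_ex_derive Q n t : 0 < n -> QS Q -> Dom n t -> ex_derive (cc Q n) t.
Proof.
  intros Hn HQ Ht. destruct HQ as [ -> | [ -> | [ -> | -> ]]].
  - eexists; apply dc0; auto.
  - eexists; apply dc1; auto.
  - eexists; apply dc2; auto.
  - apply dc3; auto.
Qed.

Lemma ginv_big n V t : 0 < n -> Dom n t -> G n V < t -> V < ginv n t.
Proof.
  intros Hn Ht H. destruct (Rle_or_lt (ginv n t) V); auto.
  pose proof (G_le n _ _ Hn H0). rewrite ginv_spec in H1; auto. lra.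
Qed.

Lemma ginv_small n V t : 0 < n -> Dom n t -> t < G n V -> ginv n t < V.
Proof.
  intros Hn Ht H. destruct (Rle_or_lt V (ginv n t)); auto.
  pose proof (G_le n _ _ Hn H0). rewrite ginv_spec in H1; auto. lra.
Qed.

Lemma bb_cont Q n t : 3 < n -> QS Q -> continuous (bb Q n) t.
Proof.
  intros Hn HQ. assert (Hn0 : 0 < n) by lra. unfold bb.
  destruct (Rlt_or_le (Lm n) t) as [h1|h1]; destruct (Rlt_or_le t (Lp n)) as [h2|h2].
  - apply (continuous_ext_loc _ _ _ (loc_sym _ _ _ (cut_loc_in n (cc Q n) t (conj h1 h2)))).
    apply (@ex_derive_continuous R_AbsRing R_NormedModule). apply cc_ex_derive; auto. split; auto.
  - destruct h2 as [h2|h2].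
    + apply (continuous_ext_loc _ _ _ (loc_sym _ _ _ (cut_loc_out n (cc Q n) t (or_intror h2)))). apply continuous_const.
    + subst t. apply cont_eps. intros e He.
      destruct (QP_decay Q n Hn HQ e He) as [V0 HV0].
      set (V1 := Rabs V0).
      exists (Lp n - G n V1). split. pose proof (Lp_gt n V1 Hn0). lra.
      intros y Hy. rewrite (cut_out n _ (Lp n)) by (unfold Dom; lra). rewrite Rminus_0_r.
      destruct (classic (Dom n y)) as [Hd|Hd].
      * rewrite cut_in; auto. unfold cc. apply HV0.
        assert (V1 < ginv n y). { apply ginv_big; auto. apply Rabs_lt_between' in Hy. lra. }
        assert (V0 <= V1) by apply RRle_abs. assert (0 <= V1) by apply Rabs_pos.
        rewrite Rabs_right; lra.
      * rewrite cut_out; auto. rewrite Rabs_R0; auto.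
  - destruct h1 as [h1|h1].
    + apply (continuous_ext_loc _ _ _ (loc_sym _ _ _ (cut_loc_out n (cc Q n) t (or_introl h1)))). apply continuous_const.
    + subst t. apply cont_eps. intros e He.
      destruct (QP_decay Q n Hn HQ e He) as [V0 HV0].
      set (V1 := Rabs V0).
      exists (G n (- V1) - Lm n). split. pose proof (Lm_lt n (-V1) Hn0). lra.
      intros y Hy. rewrite (cut_out n _ (Lm n)) by (unfold Dom; lra). rewrite Rminus_0_r.
      destruct (classic (Dom n y)) as [Hd|Hd].
      * rewrite cut_in; auto. unfold cc. apply HV0.
        assert (ginv n y < - V1). { apply ginv_small; auto. apply Rabs_lt_between' in Hy. lra. }
        assert (V0 <= V1) by apply RRle_abs. assert (0 <= V1) by apply Rabs_pos.
        rewrite Rabs_left; lra.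
      * rewrite cut_out; auto. rewrite Rabs_R0; auto.
  - pose proof (Lm_Lp n Hn0). lra.
Qed.

Lemma bb_deriv_nb Q Q' n t : 0 < n ->
  (forall t, Dom n t -> is_derive (cc Q n) t (cc Q' n t)) ->
  t <> Lm n -> t <> Lp n -> is_derive (bb Q n) t (bb Q' n t).
Proof.
  intros Hn HD h1 h2. unfold bb.
  destruct (classic (Dom n t)) as [Hd|Hd].
  - rewrite cut_in; auto. apply (is_derive_ext_loc (cc Q n)).
    apply loc_sym, cut_loc_in; auto. apply HD; auto.
  - rewrite cut_out; auto.
    assert (Ho : t < Lm n \/ Lp n < t) by (unfold Dom in Hd; lra).
    apply (is_derive_ext_loc (fun _ => 0)). apply loc_sym, cut_loc_out; auto.
    apply D_const.
Qed.

Lemma bb_deriv Q Q' n : 3 < n -> QS Q -> QS Q' ->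
  (forall t, Dom n t -> is_derive (cc Q n) t (cc Q' n t)) ->
  forall t, is_derive (bb Q n) t (bb Q' n t).
Proof.
  intros Hn HQ HQ' HD t. assert (Hn0 : 0 < n) by lra. pose proof (Lm_Lp n Hn0).
  destruct (classic (t = Lm n \/ t = Lp n)) as [Hb|Hb].
  - apply deriv_from_lim with (d0 := Lp n - Lm n). lra.
    intros; apply bb_cont; auto.
    intros x Hx. apply bb_deriv_nb; auto.
    + intros ->. destruct Hb as [->| ->]. rewrite Rminus_diag, Rabs_R0 in Hx; lra.
      rewrite Rabs_left in Hx; lra.
    + intros ->. destruct Hb as [->| ->]. rewrite Rabs_right in Hx; lra.
      rewrite Rminus_diag, Rabs_R0 in Hx; lra.
    + apply bb_cont; auto.
  - apply bb_deriv_nb; auto.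
Qed.

Definition b0 n := bb Q0 n.
Definition b1 n := bb Q1 n.
Definition b2 n := bb Q2 n.
Definition b3 n := bb Q3 n.

Lemma QS0 : QS Q0. Proof. left; auto. Qed.
Lemma QS1 : QS Q1. Proof. right; left; auto. Qed.
Lemma QS2 : QS Q2. Proof. right; right; left; auto. Qed.
Lemma QS3 : QS Q3. Proof. right; right; right; auto. Qed.

Lemma b0_deriv n t : 3 < n -> is_derive (b0 n) t (b1 n t).
Proof. intros Hn. apply bb_deriv; auto using QS0, QS1. intros; apply dc0; auto; lra. Qed.
Lemma b1_deriv n t : 3 < n -> is_derive (b1 n) t (b2 n t).
Proof. intros Hn. apply bb_deriv; auto using QS1, QS2. intros; apply dc1; auto; lra. Qed.
Lemma b2_deriv n t : 3 < n -> is_derive (b2 n) t (b3 n t).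
Proof. intros Hn. apply bb_deriv; auto using QS2, QS3. intros; apply dc2; auto; lra. Qed.
Lemma b3_cont n t : 3 < n -> continuous (b3 n) t.
Proof. intros Hn. apply bb_cont; auto using QS3. Qed.
Lemma b0_cont n t : 3 < n -> continuous (b0 n) t.
Proof. intros Hn. apply bb_cont; auto using QS0. Qed.

Lemma b_ident n t : 0 < n ->
  b3 n t * (b0 n t)^2 - 3 * b2 n t * b1 n t * b0 n t + 2 * (1 - / n^2) * (b1 n t)^3 = 0.
Proof.
  intros Hn. unfold b0, b1, b2, b3, bb.
  destruct (classic (Dom n t)) as [Hd|Hd].
  - rewrite !cut_in; auto. unfold cc, Q0, Q1, Q2, Q3. field. lra.
  - rewrite !cut_out; auto. ring.
Qed.

Lemma b0_nonneg n t : 0 <= b0 n t.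
Proof.
  unfold b0, bb. destruct (classic (Dom n t)) as [Hd|Hd].
  - rewrite cut_in; auto. unfold cc, Q0. pose proof (P_pos n (ginv n t)). lra.
  - rewrite cut_out; auto. lra.
Qed.

Lemma b0_pos n t : Dom n t -> 0 < b0 n t.
Proof. intros Hd. unfold b0, bb. rewrite cut_in; auto. unfold cc, Q0. pose proof (P_pos n (ginv n t)). lra. Qed.

Lemma b_out n t : ~ Dom n t -> b0 n t = 0 /\ b1 n t = 0 /\ b2 n t = 0 /\ b3 n t = 0.
Proof. intros Hd. unfold b0, b1, b2, b3, bb. rewrite !cut_out; auto. Qed.

Definition Tower (f0 f1 f2 f3 f4 : R -> R) : Prop :=
  (forall x, is_derive f0 x (f1 x)) /\ (forall x, is_derive f1 x (f2 x)) /\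
  (forall x, is_derive f2 x (f3 x)) /\ (forall x, is_derive f3 x (f4 x)) /\
  (forall x, continuous f4 x).

Definition EqT (n : R) (f1 f2 f3 f4 : R -> R) : Prop :=
  forall x, f4 x * (f1 x)^2 - 3 * f3 x * f2 x * f1 x + 2 * (1 - / n^2) * (f2 x)^3 = 0.

Lemma Tower_Derive_n f0 f1 f2 f3 f4 : Tower f0 f1 f2 f3 f4 ->
  (forall x, Derive_n f0 1 x = f1 x) /\ (forall x, Derive_n f0 2 x = f2 x) /\
  (forall x, Derive_n f0 3 x = f3 x) /\ (forall x, Derive_n f0 4 x = f4 x).
Proof.
  intros [h0 [h1 [h2 [h3 h4]]]].
  assert (e1 : forall x, Derive_n f0 1 x = f1 x) by (intros; simpl; apply is_derive_unique; auto).
  assert (e2 : forall x, Derive_n f0 2 x = f2 x).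
  { intros. simpl. rewrite (Derive_ext _ f1). apply is_derive_unique; auto. intros; apply e1. }
  assert (e3 : forall x, Derive_n f0 3 x = f3 x).
  { intros. change (Derive (Derive_n f0 2) x = f3 x). rewrite (Derive_ext _ f2). apply is_derive_unique; auto. intros; apply e2. }
  assert (e4 : forall x, Derive_n f0 4 x = f4 x).
  { intros. change (Derive (Derive_n f0 3) x = f4 x). rewrite (Derive_ext _ f3). apply is_derive_unique; auto. intros; apply e3. }
  auto.
Qed.

Lemma Tower_ex f0 f1 f2 f3 f4 : Tower f0 f1 f2 f3 f4 ->
  forall k, (k <= 4)%nat -> forall x, ex_derive_n f0 k x.
Proof.
  intros HT k Hk x. pose proof (Tower_Derive_n _ _ _ _ _ HT) as [e1 [e2 [e3 e4]]].
  destruct HT as [h0 [h1 [h2 [h3 h4]]]].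
  destruct k as [|[|[|[|[|k]]]]]; simpl; auto.
  - eexists; apply h0.
  - apply ex_derive_ext with f1. intros; symmetry; apply e1. eexists; apply h1.
  - apply ex_derive_ext with f2. intros; symmetry; apply e2. eexists; apply h2.
  - apply ex_derive_ext with f3. intros; symmetry; apply e3. eexists; apply h3.
  - lia.
Qed.

Lemma glue n (y : R -> R) :
  (forall t, exists f0 f1 f2 f3 f4, Tower f0 f1 f2 f3 f4 /\ EqT n f1 f2 f3 f4 /\
       locally t (fun s => f0 s = y s)) ->
  C4 y /\ forall t, eqB n y t.
Proof.
  intros H. split; [split|].
  - intros k Hk t. destruct (H t) as [f0 [f1 [f2 [f3 [f4 [HT [HE HL]]]]]]].
    apply (ex_derive_n_ext_loc f0 y k t HL). apply (Tower_ex _ _ _ _ _ HT); auto.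
  - intros t. destruct (H t) as [f0 [f1 [f2 [f3 [f4 [HT [HE HL]]]]]]].
    pose proof (Tower_Derive_n _ _ _ _ _ HT) as [e1 [e2 [e3 e4]]].
    apply (continuous_ext_loc (Derive_n y 4) f4 t).
    + apply filter_imp with (2 := locally_locally _ _ HL). intros s Hs.
      rewrite <- (Derive_n_ext_loc f0 y 4 s Hs). symmetry; apply e4.
    + apply HT.
  - intros t. destruct (H t) as [f0 [f1 [f2 [f3 [f4 [HT [HE HL]]]]]]].
    pose proof (Tower_Derive_n _ _ _ _ _ HT) as [e1 [e2 [e3 e4]]].
    unfold eqB. rewrite <- !(Derive_n_ext_loc f0 y _ t HL). rewrite e1, e2, e3, e4. apply HE.
Qed.

Lemma D_aff (f : R -> R) a c x df : is_derive f (a*x+c) df -> is_derive (fun x => f (a*x+c)) x (a * df).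
Proof.
  intros H. assert (Ha : is_derive (fun x => a*x+c) x a).
  { apply (is_derive_eq _ _ _ _ (D_plus _ _ x _ _ (D_scal (fun x => x) a x 1 (is_derive_id x)) (D_const c x))). req. ring. }
  pose proof (is_derive_comp f (fun x => a*x+c) x df a H Ha) as H2. apply H2.
Qed.

Lemma Tower_scale f0 f1 f2 f3 f4 A B a c : Tower f0 f1 f2 f3 f4 ->
  Tower (fun x => A + B * f0 (a*x+c)) (fun x => B * a * f1 (a*x+c)) (fun x => B * a^2 * f2 (a*x+c))
        (fun x => B * a^3 * f3 (a*x+c)) (fun x => B * a^4 * f4 (a*x+c)).
Proof.
  intros [h0 [h1 [h2 [h3 h4]]]].
  split; [|split; [|split; [|split]]]; intros x.
  - apply (is_derive_eq _ _ _ _ (D_plus _ _ x _ _ (D_const A x) (D_scal _ B x _ (D_aff _ a c x _ (h0 _))))). req. ring.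
  - apply (is_derive_eq _ _ _ _ (D_scal _ (B*a) x _ (D_aff _ a c x _ (h1 _)))). req. ring.
  - apply (is_derive_eq _ _ _ _ (D_scal _ (B*a^2) x _ (D_aff _ a c x _ (h2 _)))). req. ring.
  - apply (is_derive_eq _ _ _ _ (D_scal _ (B*a^3) x _ (D_aff _ a c x _ (h3 _)))). req. ring.
  - apply (continuous_scal_r (B * a^4) (fun x => f4 (a*x+c))).
    apply continuous_comp. 2: apply h4.
    apply (@ex_derive_continuous R_AbsRing R_NormedModule). eexists.
    apply (D_plus _ _ x _ _ (D_scal (fun x => x) a x 1 (is_derive_id x)) (D_const c x)).
Qed.

Lemma EqT_scale n f1 f2 f3 f4 B a c : EqT n f1 f2 f3 f4 ->
  EqT n (fun x => B * a * f1 (a*x+c)) (fun x => B * a^2 * f2 (a*x+c))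
        (fun x => B * a^3 * f3 (a*x+c)) (fun x => B * a^4 * f4 (a*x+c)).
Proof.
  intros H x. pose proof (H (a*x+c)).
  replace (B * a ^ 4 * f4 (a * x + c) * (B * a * f1 (a * x + c)) ^ 2 -
   3 * (B * a ^ 3 * f3 (a * x + c)) * (B * a ^ 2 * f2 (a * x + c)) * (B * a * f1 (a * x + c)) +
   2 * (1 - / n ^ 2) * (B * a ^ 2 * f2 (a * x + c)) ^ 3)
  with (B^3 * a^6 * (f4 (a * x + c) * (f1 (a * x + c)) ^ 2 - 3 * f3 (a * x + c) * f2 (a * x + c) * f1 (a * x + c) +
    2 * (1 - / n ^ 2) * (f2 (a * x + c)) ^ 3)) by ring.
  rewrite H0. ring.
Qed.

Lemma Tower_sum f0 f1 f2 f3 f4 g0 g1 g2 g3 g4 C : Tower f0 f1 f2 f3 f4 -> Tower g0 g1 g2 g3 g4 ->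
  Tower (fun x => f0 x + g0 x + C) (fun x => f1 x + g1 x) (fun x => f2 x + g2 x)
        (fun x => f3 x + g3 x) (fun x => f4 x + g4 x).
Proof.
  intros [h0 [h1 [h2 [h3 h4]]]] [k0 [k1 [k2 [k3 k4]]]].
  split; [|split; [|split; [|split]]]; intros x.
  - apply (is_derive_eq _ _ _ _ (D_plus _ _ x _ _ (D_plus _ _ x _ _ (h0 x) (k0 x)) (D_const C x))). req. ring.
  - apply (D_plus _ _ x _ _ (h1 x) (k1 x)).
  - apply (D_plus _ _ x _ _ (h2 x) (k2 x)).
  - apply (D_plus _ _ x _ _ (h3 x) (k3 x)).
  - apply (continuous_plus f4 g4); auto.
Qed.

Lemma EqT_sum n f1 f2 f3 f4 g1 g2 g3 g4 : EqT n f1 f2 f3 f4 -> EqT n g1 g2 g3 g4 ->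
  (forall x, (f1 x = 0 /\ f2 x = 0 /\ f3 x = 0 /\ f4 x = 0) \/ (g1 x = 0 /\ g2 x = 0 /\ g3 x = 0 /\ g4 x = 0)) ->
  EqT n (fun x => f1 x + g1 x) (fun x => f2 x + g2 x) (fun x => f3 x + g3 x) (fun x => f4 x + g4 x).
Proof.
  intros Hf Hg Hd x. destruct (Hd x) as [[-> [-> [-> ->]]]|[-> [-> [-> ->]]]].
  - rewrite !Rplus_0_l. apply Hg.
  - rewrite !Rplus_0_r. apply Hf.
Qed.

Definition I (n t : R) : R := RInt (b0 n) (Lm n) t.

Lemma ex_RInt_b0 n a b : 3 < n -> ex_RInt (b0 n) a b.
Proof. intros Hn. apply (@ex_RInt_continuous R_CompleteNormedModule). intros; apply b0_cont; auto. Qed.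

Lemma I_deriv n t : 3 < n -> is_derive (I n) t (b0 n t).
Proof.
  intros Hn. unfold I. apply (is_derive_RInt (b0 n) (RInt (b0 n) (Lm n)) (Lm n) t).
  - apply filter_forall. intros b. apply (@RInt_correct R_CompleteNormedModule). apply ex_RInt_b0; auto.
  - apply b0_cont; auto.
Qed.

Lemma Tower_I n : 3 < n -> Tower (I n) (b0 n) (b1 n) (b2 n) (b3 n).
Proof.
  intros Hn. split; [|split; [|split; [|split]]]; intros x.
  apply I_deriv; auto. apply b0_deriv; auto. apply b1_deriv; auto. apply b2_deriv; auto. apply b3_cont; auto.
Qed.

Lemma EqT_I n : 0 < n -> EqT n (b0 n) (b1 n) (b2 n) (b3 n).
Proof. intros Hn x. apply b_ident; auto. Qed.

Lemma RInt_zero (f : R -> R) a b : (forall x, Rmin a b < x < Rmax a b -> f x = 0) -> RInt f a b = 0.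
Proof.
  intros H. rewrite (RInt_ext f (fun _ => 0)); auto.
  rewrite RInt_const. unfold scal; simpl; unfold mult; simpl. ring.
Qed.

Lemma I_left n t : 3 < n -> t <= Lm n -> I n t = 0.
Proof.
  intros Hn Ht. unfold I. apply RInt_zero. intros x Hx.
  rewrite Rmin_right in Hx by lra. rewrite Rmax_left in Hx by lra.
  apply b_out. unfold Dom; lra.
Qed.

Definition M (n : R) : R := I n (Lp n).

Lemma I_chasles n a b : 3 < n -> I n b - I n a = RInt (b0 n) a b.
Proof.
  intros Hn. unfold I. rewrite <- (RInt_Chasles (b0 n) (Lm n) a b); try apply ex_RInt_b0; auto.
  unfold plus; simpl. ring.
Qed.

Lemma I_right n t : 3 < n -> Lp n <= t -> I n t = M n.
Proof.
  intros Hn Ht. unfold M. assert (I n t - I n (Lp n) = 0).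
  { rewrite I_chasles; auto. apply RInt_zero. intros x Hx.
    rewrite Rmin_left in Hx by lra. rewrite Rmax_right in Hx by lra.
    apply b_out. unfold Dom; lra. } lra.
Qed.

Lemma I_mono n a b : 3 < n -> a <= b -> I n a <= I n b.
Proof.
  intros Hn Hab. assert (0 <= I n b - I n a).
  { rewrite I_chasles; auto. apply RInt_ge_0; auto. apply ex_RInt_b0; auto. intros; apply b0_nonneg. }
  lra.
Qed.

Lemma M_pos n : 3 < n -> 0 < M n.
Proof.
  intros Hn. assert (Hn0 : 0 < n) by lra. pose proof (Lm_Lp n Hn0).
  assert (H0 : 0 <= M n). { unfold M. rewrite <- (I_left n (Lm n) Hn (Rle_refl _)). apply I_mono; lra. }
  destruct H0 as [H0|H0]; auto. exfalso.
  assert (Hl : locally 0 (fun s => (fun _ : R => 0) s = I n s)).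
  { apply filter_imp with (2 := loc_in (Lm n) (Lp n) 0 ltac:(lra)). intros s Hs.
    assert (I n (Lm n) <= I n s) by (apply I_mono; lra).
    assert (I n s <= I n (Lp n)) by (apply I_mono; lra).
    rewrite I_left in H1 by lra. fold (M n) in H2. simpl. lra. }
  pose proof (is_derive_ext_loc _ _ 0 0 Hl (D_const 0 0)) as Hd.
  pose proof (I_deriv n 0 Hn) as Hd2.
  apply is_derive_unique in Hd. apply is_derive_unique in Hd2. rewrite Hd in Hd2.
  pose proof (b0_pos n 0 ltac:(unfold Dom; lra)). lra.
Qed.

Definition Lw (n : R) : R := Lp n - Lm n.
Definition S0 n s := 0 + / M n * I n (Lw n * s + Lm n).
Definition S1 n s := / M n * Lw n * b0 n (Lw n * s + Lm n).
Definition S2 n s := / M n * Lw n ^ 2 * b1 n (Lw n * s + Lm n).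
Definition S3 n s := / M n * Lw n ^ 3 * b2 n (Lw n * s + Lm n).
Definition S4 n s := / M n * Lw n ^ 4 * b3 n (Lw n * s + Lm n).

Lemma Tower_S n : 3 < n -> Tower (S0 n) (S1 n) (S2 n) (S3 n) (S4 n).
Proof. intros Hn. apply (Tower_scale _ _ _ _ _ 0 (/ M n) (Lw n) (Lm n) (Tower_I n Hn)). Qed.

Lemma EqT_S n : 3 < n -> EqT n (S1 n) (S2 n) (S3 n) (S4 n).
Proof. intros Hn. apply (EqT_scale n _ _ _ _ (/ M n) (Lw n) (Lm n) (EqT_I n ltac:(lra))). Qed.

Lemma Lw_pos n : 3 < n -> 0 < Lw n.
Proof. intros Hn. pose proof (Lm_Lp n ltac:(lra)). unfold Lw; lra. Qed.

Lemma S0_left n s : 3 < n -> s <= 0 -> S0 n s = 0.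
Proof.
  intros Hn Hs. pose proof (Lw_pos n Hn). unfold S0. rewrite I_left; auto. ring. nra.
Qed.

Lemma S0_right n s : 3 < n -> 1 <= s -> S0 n s = 1.
Proof.
  intros Hn Hs. pose proof (Lw_pos n Hn). pose proof (M_pos n Hn). unfold S0. rewrite I_right; auto.
  field. lra. unfold Lw in *. nra.
Qed.

Lemma S0_bounds n s : 3 < n -> 0 <= S0 n s <= 1.
Proof.
  intros Hn. pose proof (Lw_pos n Hn). pose proof (M_pos n Hn).
  unfold S0. set (t := Lw n * s + Lm n).
  assert (0 <= I n t <= M n).
  { split.
    - destruct (Rle_or_lt t (Lm n)). rewrite I_left; auto; lra.
      rewrite <- (I_left n (Lm n) Hn (Rle_refl _)). apply I_mono; lra.
    - destruct (Rle_or_lt (Lp n) t). rewrite I_right; auto; lra.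
      apply I_mono; lra. }
  split.
  - apply Rplus_le_le_0_compat. lra. apply Rmult_le_pos. apply Rlt_le, Rinv_0_lt_compat; auto. lra.
  - rewrite Rplus_0_l. apply Rmult_le_reg_l with (M n); auto. field_simplify; lra.
Qed.

Lemma S_zero n s : 3 < n -> (s <= 0 \/ 1 <= s) ->
  S1 n s = 0 /\ S2 n s = 0 /\ S3 n s = 0 /\ S4 n s = 0.
Proof.
  intros Hn Hs. pose proof (Lw_pos n Hn).
  assert (~ Dom n (Lw n * s + Lm n)).
  { unfold Dom, Lw in *. destruct Hs; nra. }
  destruct (b_out n _ H0) as [e0 [e1 [e2 e3]]].
  unfold S1, S2, S3, S4. rewrite e0, e1, e2, e3. repeat split; ring.
Qed.

Lemma two_cell n p g q vp vg vq : 3 < n -> p < g < q ->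
  exists f0 f1 f2 f3 f4, Tower f0 f1 f2 f3 f4 /\ EqT n f1 f2 f3 f4 /\
    (forall x, x <= g -> f0 x = vp + (vg - vp) * S0 n ((x - p) / (g - p))) /\
    (forall x, g <= x -> f0 x = vg + (vq - vg) * S0 n ((x - g) / (q - g))).
Proof.
  intros Hn Hpq.
  set (a1 := / (g - p)). set (c1 := - p / (g - p)). set (a2 := / (q - g)). set (c2 := - g / (q - g)).
  assert (E1 : forall x, a1 * x + c1 = (x - p) / (g - p)) by (intros; unfold a1, c1; field; lra).
  assert (E2 : forall x, a2 * x + c2 = (x - g) / (q - g)) by (intros; unfold a2, c2; field; lra).
  pose proof (Tower_scale _ _ _ _ _ vp (vg - vp) a1 c1 (Tower_S n Hn)) as T1.
  pose proof (Tower_scale _ _ _ _ _ vg (vq - vg) a2 c2 (Tower_S n Hn)) as T2.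
  pose proof (Tower_sum _ _ _ _ _ _ _ _ _ _ (- vg) T1 T2) as T.
  do 5 eexists. split; [apply T|]. split.
  - apply EqT_sum. apply EqT_scale, EqT_S; auto. apply EqT_scale, EqT_S; auto.
    intros x. destruct (Rle_or_lt x g).
    + right. assert ((a2 * x + c2) <= 0). { rewrite E2. apply Rmult_le_0_r. lra. apply Rlt_le, Rinv_0_lt_compat; lra. }
      destruct (S_zero n (a2*x+c2) Hn (or_introl H0)) as [e1 [e2 [e3 e4]]].
      rewrite e1, e2, e3, e4. repeat split; ring.
    + left. assert (1 <= (a1 * x + c1)). { rewrite E1. apply Rmult_le_reg_l with (g - p). lra. field_simplify; lra. }
      destruct (S_zero n (a1*x+c1) Hn (or_intror H0)) as [e1 [e2 [e3 e4]]].
      rewrite e1, e2, e3, e4. repeat split; ring.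
  - split; intros x Hx; cbv beta.
    + rewrite <- E1, E2. rewrite (S0_left n ((x - g) / (q - g))); auto. ring.
      apply Rmult_le_0_r. lra. apply Rlt_le, Rinv_0_lt_compat; lra.
    + rewrite <- E2. rewrite (S0_right n (a1 * x + c1)); auto. ring.
      rewrite E1. apply Rmult_le_reg_l with (g - p). lra. field_simplify; lra.
Qed.

Definition Fl (x : R) : Z := (up x - 1)%Z.

Lemma Fl_spec x : IZR (Fl x) <= x < IZR (Fl x) + 1.
Proof. unfold Fl. rewrite minus_IZR. destruct (archimed x). simpl. lra. Qed.

Lemma Fl_unique z x : IZR z <= x < IZR z + 1 -> Fl x = z.
Proof.
  intros H. unfold Fl. rewrite <- (tech_up x (z + 1)). lia.
  rewrite plus_IZR; simpl; lra. rewrite plus_IZR; simpl; lra.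
Qed.


Definition NN (Nf : Z -> nat) (t : R) : R := INR (Nf (Fl t)).
Definition jj (Nf : Z -> nat) (t : R) : Z := Fl ((t - IZR (Fl t)) * NN Nf t).
Definition pp (Nf : Z -> nat) (t : R) : R := IZR (Fl t) + IZR (jj Nf t) / NN Nf t.
Definition qq (Nf : Z -> nat) (t : R) : R := IZR (Fl t) + (IZR (jj Nf t) + 1) / NN Nf t.

Lemma INR_pos_nat (N : nat) : (0 < N)%nat -> 1 <= INR N.
Proof. intros H. apply (le_INR 1). lia. Qed.

Lemma cell_bounds Nf t : (forall k, (0 < Nf k)%nat) ->
  0 <= IZR (jj Nf t) /\ IZR (jj Nf t) + 1 <= NN Nf t /\ pp Nf t <= t < qq Nf t /\
  IZR (Fl t) <= pp Nf t /\ qq Nf t <= IZR (Fl t) + 1 /\ qq Nf t - pp Nf t = / NN Nf t.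
Proof.
  intros HN. assert (HN1 : 1 <= NN Nf t) by (apply INR_pos_nat; auto).
  pose proof (Fl_spec t) as Hk. set (k := IZR (Fl t)) in *. set (N := NN Nf t) in *.
  pose proof (Fl_spec ((t - k) * N)) as Hj. unfold pp, qq, jj. fold k N. fold N in Hj.
  set (j := Fl ((t - k) * N)) in *.
  assert (Hj0 : 0 <= IZR j).
  { assert (-1 < IZR j) by nra. apply IZR_le. apply lt_IZR in H. lia. }
  assert (HjN : IZR j + 1 <= N).
  { assert (IZR j < N) by nra. unfold N, NN in H. rewrite INR_IZR_INZ in H. apply lt_IZR in H.
    unfold N, NN. rewrite INR_IZR_INZ. rewrite <- plus_IZR. apply IZR_le. lia. }
  repeat split; auto.
  - apply Rmult_le_reg_r with N. lra. field_simplify; lra.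
  - apply Rmult_lt_reg_r with N. lra. field_simplify; lra.
  - assert (0 <= IZR j / N) by (apply Rdiv_le_0_compat; lra). lra.
  - assert ((IZR j + 1)/N <= 1) by (apply Rmult_le_reg_r with N; [lra| field_simplify; lra]). lra.
  - field. lra.
Qed.

Lemma cell_of Nf (k i : Z) s : (forall k, (0 < Nf k)%nat) ->
  0 <= IZR i -> IZR i + 1 <= INR (Nf k) ->
  IZR k + IZR i / INR (Nf k) <= s < IZR k + (IZR i + 1) / INR (Nf k) ->
  pp Nf s = IZR k + IZR i / INR (Nf k) /\ qq Nf s = IZR k + (IZR i + 1) / INR (Nf k).
Proof.
  intros HN Hi0 HiN Hs. assert (HN1 : 1 <= INR (Nf k)) by (apply INR_pos_nat; auto).
  set (N := INR (Nf k)) in *.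
  assert (Hk : Fl s = k).
  { apply Fl_unique. assert (0 <= IZR i / N) by (apply Rdiv_le_0_compat; lra).
    assert ((IZR i + 1)/N <= 1) by (apply Rmult_le_reg_r with N; [lra| field_simplify; lra]). lra. }
  assert (HNs : NN Nf s = N) by (unfold NN; rewrite Hk; auto).
  assert (Hj : jj Nf s = i).
  { unfold jj. rewrite Hk, HNs. apply Fl_unique. destruct Hs as [Hs1 Hs2]. split.
    - apply Rmult_le_reg_r with (/N). apply Rinv_0_lt_compat; lra. field_simplify; try lra;
      try (replace (IZR i / N) with (IZR k + IZR i / N - IZR k) by ring; lra).
    - apply Rmult_lt_reg_r with (/N). apply Rinv_0_lt_compat; lra. field_simplify; try lra;
      try (replace ((IZR i + 1) / N) with (IZR k + (IZR i + 1) / N - IZR k) by ring; lra). }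
  unfold pp, qq. rewrite Hk, Hj, HNs. auto.
Qed.

Lemma cell_self Nf t s : (forall k, (0 < Nf k)%nat) -> pp Nf t <= s < qq Nf t ->
  pp Nf s = pp Nf t /\ qq Nf s = qq Nf t.
Proof.
  intros HN Hs. destruct (cell_bounds Nf t HN) as [h1 [h2 _]].
  apply (cell_of Nf (Fl t) (jj Nf t) s HN); auto.
Qed.

Lemma left_nb Nf t : (forall k, (0 < Nf k)%nat) ->
  exists p', p' < pp Nf t /\ forall s, p' <= s < pp Nf t -> pp Nf s = p' /\ qq Nf s = pp Nf t.
Proof.
  intros HN. destruct (cell_bounds Nf t HN) as [h1 [h2 _]].
  assert (HN1 : 1 <= NN Nf t) by (apply INR_pos_nat; auto).
  destruct (Rle_or_lt 1 (IZR (jj Nf t))) as [Hj|Hj].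
  - exists (IZR (Fl t) + IZR (jj Nf t - 1) / NN Nf t). rewrite minus_IZR. simpl. split.
    + unfold pp. apply Rplus_lt_compat_l. apply Rmult_lt_compat_r. apply Rinv_0_lt_compat; lra. lra.
    + intros s Hs. 
      pose proof (cell_of Nf (Fl t) (jj Nf t - 1) s HN) as H. rewrite minus_IZR in H. simpl in H.
      unfold pp, NN in *. 
      replace (IZR (jj Nf t) - 1 + 1) with (IZR (jj Nf t)) in H by ring. apply H; lra.
  - assert (Hj0 : jj Nf t = 0%Z).
    { apply le_IZR in h1. assert (IZR (jj Nf t) < IZR 1) by (simpl; lra). apply lt_IZR in H. lia. }
    set (k1 := (Fl t - 1)%Z). set (N' := Nf k1).
    assert (HN' : 1 <= INR N') by (apply INR_pos_nat; unfold N'; auto).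
    set (i := (Z.of_nat N' - 1)%Z).
    assert (Hi : IZR i = INR N' - 1) by (unfold i; rewrite minus_IZR, <- INR_IZR_INZ; simpl; ring).
    assert (Hpp : pp Nf t = IZR (Fl t)) by (unfold pp; rewrite Hj0; simpl; field; lra).
    exists (IZR k1 + IZR i / INR N'). split.
    + rewrite Hpp. unfold k1. rewrite minus_IZR. simpl. rewrite Hi.
      assert ((INR N' - 1) / INR N' < 1) by (apply Rmult_lt_reg_r with (INR N'); [lra|field_simplify; lra]). lra.
    + intros s Hs. pose proof (cell_of Nf k1 i s HN) as H. fold N' in H.
      rewrite Hpp in Hs |- *.
      assert (E : IZR k1 + (IZR i + 1) / INR N' = IZR (Fl t)).
      { unfold k1. rewrite minus_IZR, Hi. simpl. field. lra. }
      rewrite E in H. apply H; try lra.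
Qed.

Definition yy (n : R) (phi : R -> R) (Nf : Z -> nat) (t : R) : R :=
  phi (pp Nf t) + (phi (qq Nf t) - phi (pp Nf t)) * S0 n ((t - pp Nf t) / (qq Nf t - pp Nf t)).

Lemma yy_local n phi Nf t : 3 < n -> (forall k, (0 < Nf k)%nat) ->
  exists f0 f1 f2 f3 f4, Tower f0 f1 f2 f3 f4 /\ EqT n f1 f2 f3 f4 /\
       locally t (fun s => f0 s = yy n phi Nf s).
Proof.
  intros Hn HN. destruct (cell_bounds Nf t HN) as [_ [_ [[ht1 ht2] _]]].
  destruct (left_nb Nf t HN) as [p' [Hp' Hnb]].
  set (g := pp Nf t) in *. set (q := qq Nf t) in *.
  destruct (two_cell n p' g q (phi p') (phi g) (phi q) Hn ltac:(lra)) as [f0 [f1 [f2 [f3 [f4 [HT [HE [HL HR]]]]]]]].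
  exists f0, f1, f2, f3, f4. split; auto. split; auto.
  apply filter_imp with (2 := loc_in p' q t ltac:(lra)). intros s Hs.
  unfold yy. destruct (Rlt_or_le s g) as [h|h].
  - destruct (Hnb s ltac:(lra)) as [e1 e2]. rewrite e1, e2. apply HL. lra.
  - destruct (cell_self Nf t s HN ltac:(fold g q; lra)) as [e1 e2]. fold g q in e1, e2. rewrite e1, e2. apply HR. lra.
Qed.

Lemma good_N (phi eps : R -> R) (k : Z) :
  (forall t, continuous phi t) -> (forall t, continuous eps t) -> (forall t, 0 < eps t) ->
  exists N : nat, (0 < N)%nat /\ forall s t u,
    IZR k <= s <= IZR k + 1 -> IZR k <= t <= IZR k + 1 -> IZR k <= u <= IZR k + 1 ->
    Rabs (s - t) <= / INR N -> 2 * Rabs (phi s - phi t) < eps u.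
Proof.
  intros Hphi Heps Hpos.
  destruct (continuity_ab_min eps (IZR k) (IZR k + 1) ltac:(lra)) as [mx [Hmx _]].
  { intros c _. apply continuity_pt_filterlim. apply Heps. }
  set (m := eps mx). assert (Hm : 0 < m) by apply Hpos.
  destruct (Heine phi (fun c => IZR k <= c <= IZR k + 1) (compact_P3 _ _)) with (mkposreal (m/2) ltac:(lra)) as [d Hd].
  { intros x _. apply continuity_pt_filterlim. apply Hphi. }
  destruct (archimed_cor1 d (cond_pos d)) as [N [HN1 HN2]].
  exists N. split; auto. intros s t u Hs Ht Hu Hst.
  assert (Rabs (phi s - phi t) < m/2). { apply (Hd s t Hs Ht). lra. }
  pose proof (Hmx u Hu). fold m in H0. lra.
Qed.

Theorem main (n : R) (hn : 3 < n) :
  forall (phi eps : R -> R),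
    (forall t : R, continuous phi t) ->
    (forall t : R, continuous eps t) ->
    (forall t : R, 0 < eps t) ->
    exists y : R -> R,
      C4 y /\
      (forall t : R, eqB n y t) /\
      (forall t : R, Rabs (y t - phi t) < eps t).
Proof.
  intros phi eps Hphi Heps Hpos.
  pose (Nf := fun k => proj1_sig (constructive_indefinite_description _ (good_N phi eps k Hphi Heps Hpos))).
  assert (HNf : forall k, (0 < Nf k)%nat /\ forall s t u,
    IZR k <= s <= IZR k + 1 -> IZR k <= t <= IZR k + 1 -> IZR k <= u <= IZR k + 1 ->
    Rabs (s - t) <= / INR (Nf k) -> 2 * Rabs (phi s - phi t) < eps u).
  { intros k. unfold Nf. destruct constructive_indefinite_description as [N HN]. simpl. auto. }
  assert (HN : forall k, (0 < Nf k)%nat) by (intros; apply HNf).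
  exists (yy n phi Nf).
  destruct (glue n (yy n phi Nf)) as [HC HE].
  { intros t. apply yy_local; auto. }
  split; auto. split; auto.
  intros t. destruct (cell_bounds Nf t HN) as [_ [_ [[ht1 ht2] [hk1 [hk2 hw]]]]].
  pose proof (Fl_spec t) as Hk.
  destruct (HNf (Fl t)) as [_ Hg].
  assert (HN1 : 1 <= NN Nf t) by (apply INR_pos_nat; auto).
  assert (Hw : / NN Nf t > 0) by (apply Rinv_0_lt_compat; lra).
  set (p := pp Nf t) in *. set (q := qq Nf t) in *.
  assert (A1 : 2 * Rabs (phi p - phi t) < eps t).
  { apply Hg; try lra. rewrite Rabs_left1 by lra. unfold NN in hw. lra. }
  assert (A2 : 2 * Rabs (phi q - phi p) < eps t).
  { apply Hg; try lra. rewrite Rabs_right by lra. unfold NN in hw. lra. }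
  pose proof (S0_bounds n ((t - p) / (q - p)) hn) as HS.
  unfold yy. fold p q.
  replace (phi p + (phi q - phi p) * S0 n ((t - p) / (q - p)) - phi t)
    with ((phi p - phi t) + (phi q - phi p) * S0 n ((t - p) / (q - p))) by ring.
  eapply Rle_lt_trans. apply Rabs_triang. rewrite Rabs_mult.
  rewrite (Rabs_right (S0 n _)) by lra.
  assert (Rabs (phi q - phi p) * S0 n ((t - p) / (q - p)) <= Rabs (phi q - phi p)).
  { pose proof (Rabs_pos (phi q - phi p)). nra. }
  lra.
Qed.


Theorem theorem4 (n : R) (hn : 3 < n) :
  forall (phi eps : R -> R),
    (forall t : R, continuous phi t) ->
    (forall t : R, continuous eps t) ->
    (forall t : R, 0 < eps t) ->
    exists y : R -> R,
      C4 y /\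
      (forall t : R, eqB n y t) /\
      (forall t : R, Rabs (y t - phi t) < eps t).
Proof. exact (main n hn). Qed.
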